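(* For every $(s,a)\in\mathcal{S}\times\mathcal{A}$, the map $\pi\mapsto d^\pi(s,a)$ is $L$-Lipschitz on $\Pi$ with $L=\frac{|\mathcal{A}|}{(1-\gamma)^2}$, i.e. $|d^{\pi'}(s,a)-d^\pi(s,a)|\le\frac{|\mathcal{A}|}{(1-\gamma)^2}\|\pi'-\pi\|_2$ for all $\pi,\pi'\in\Pi$.
   Context: Finite MDP with finite state space $\mathcal{S}$, finite action space $\mathcal{A}$, transition kernel $P$, discount $\gamma\in[0,1)$, initial distribution $\mu\in\Delta_{\mathcal{S}}$. $\Pi$: stationary randomized policies, viewed as vectors $(\pi(a|s))_{s,a}\in\mathbb{R}^{\mathcal{S}\times\mathcal{A}}$ with Euclidean norm $\|\cdot\|_2$; $P^\pi(s'|s)=\sum_a\pi(a|s)P(s'|s,a)$. Occupancy: $d^\pi=\mu^\top(I-\gamma P^\pi)^{-1}$, $d^\pi(s,a)=d^\pi(s)\pi(a|s)$. *)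

(* Defs.v *)
From mathcomp Require Import all_boot all_order all_algebra.
Set Implicit Arguments. Unset Strict Implicit. Unset Printing Implicit Defensive.
Import Order.TTheory GRing.Theory Num.Theory.
Local Open Scope ring_scope.

Section MDP.
Variables (R : rcfType) (nS nA : nat).

(* transition kernel: P s a s' = P(s'|s,a) *)
Definition is_kernel (P : 'I_nS -> 'I_nA -> 'I_nS -> R) : Prop :=
  (forall s a s', 0 <= P s a s') /\ (forall s a, \sum_(s' < nS) P s a s' = 1).

Definition is_distr (mu : 'rV[R]_nS) : Prop :=
  (forall s, 0 <= mu 0 s) /\ \sum_(s < nS) mu 0 s = 1.

(* stationary randomized policy, as a matrix pi s a = pi(a|s) *)
Definition is_policy (pi : 'M[R]_(nS, nA)) : Prop :=
  (forall s a, 0 <= pi s a) /\ (forall s, \sum_(a < nA) pi s a = 1).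

Definition Ppi (P : 'I_nS -> 'I_nA -> 'I_nS -> R) (pi : 'M[R]_(nS, nA))
  : 'M[R]_nS :=
  \matrix_(s, s') \sum_(a < nA) pi s a * P s a s'.

Definition dstate (mu : 'rV[R]_nS) (gamma : R)
  (P : 'I_nS -> 'I_nA -> 'I_nS -> R) (pi : 'M[R]_(nS, nA)) : 'rV[R]_nS :=
  mu *m invmx (1%:M - gamma *: Ppi P pi).

Definition docc (mu : 'rV[R]_nS) (gamma : R)
  (P : 'I_nS -> 'I_nA -> 'I_nS -> R) (pi : 'M[R]_(nS, nA))
  (s : 'I_nS) (a : 'I_nA) : R :=
  dstate mu gamma P pi 0 s * pi s a.

Definition norm2 (M : 'M[R]_(nS, nA)) : R :=
  Num.sqrt (\sum_(s < nS) \sum_(a < nA) M s a ^+ 2).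

End MDP.

(* Main.v *)
Require Import Defs.
From mathcomp Require Import all_boot all_order all_algebra.
From mathcomp Require Import ring lra.
Import Order.TTheory GRing.Theory Num.Theory.
Local Open Scope ring_scope.

Section Aux.
Set Implicit Arguments.
Variables (R : rcfType) (n : nat).

Definition N1 (x : 'rV[R]_n) : R := \sum_(i < n) `|x 0 i|.

Lemma N1_ge0 (x : 'rV[R]_n) : 0 <= N1 x.
Proof. by apply: sumr_ge0 => i _. Qed.

Lemma N1_contract (M : 'M[R]_n) (c : R) (x : 'rV[R]_n) :
  (forall i, \sum_(j < n) `|M i j| <= c) -> 0 <= c ->
  N1 (x *m M) <= c * N1 x.
Proof.
move=> hM hc; rewrite /N1.
apply: (@le_trans _ _ (\sum_(j < n) \sum_(i < n) `|x 0 i| * `|M i j|)).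
  apply: ler_sum => j _; rewrite mxE.
  apply: le_trans (ler_norm_sum _ _ _) _.
  by apply: ler_sum => i _; rewrite normrM.
rewrite exchange_big /= mulr_sumr; apply: ler_sum => i _.
by rewrite -mulr_sumr mulrC ler_wpM2r.
Qed.

Lemma N1_entry (x : 'rV[R]_n) i : `|x 0 i| <= N1 x.
Proof.
rewrite /N1 (bigD1 i) //= lerDl; by apply: sumr_ge0.
Qed.

Lemma N1_D (x y : 'rV[R]_n) : N1 (x + y) <= N1 x + N1 y.
Proof.
rewrite /N1 -big_split /=; apply: ler_sum => i _; rewrite mxE; exact: ler_normD.
Qed.

Lemma N1_Z (g : R) (x : 'rV[R]_n) : N1 (g *: x) = `|g| * N1 x.
Proof.
by rewrite /N1 mulr_sumr; apply: eq_bigr => i _; rewrite mxE normrM.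
Qed.

Lemma N1_N (x : 'rV[R]_n) : N1 (- x) = N1 x.
Proof. by rewrite /N1; apply: eq_bigr => i _; rewrite mxE normrN. Qed.

Lemma N1_eq0 (x : 'rV[R]_n) : N1 x = 0 -> x = 0.
Proof.
move=> h; apply/rowP => i; rewrite mxE; apply/eqP; rewrite -normr_eq0.
rewrite eq_le normr_ge0 andbT -h; exact: N1_entry.
Qed.

Lemma N1_lower (M : 'M[R]_n) (g : R) (x : 'rV[R]_n) :
  (forall i, \sum_(j < n) `|M i j| <= 1) -> 0 <= g ->
  (1 - g) * N1 x <= N1 (x *m (1%:M - g *: M)).
Proof.
move=> hM hg.
have h1 := @N1_contract M 1 x hM ler01.
have e : x = x *m (1%:M - g *: M) + g *: (x *m M).
  by rewrite mulmxBr mulmx1 -scalemxAr subrK.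
have h2 : N1 x <= N1 (x *m (1%:M - g *: M)) + g * N1 (x *m M).
  by rewrite {1}e; apply: le_trans (N1_D _ _) _; rewrite N1_Z ger0_norm.
have : g * N1 (x *m M) <= g * N1 x by rewrite ler_wpM2l // -[N1 x]mul1r.
lra.
Qed.

Lemma unit_of_lower (A : 'M[R]_n) (c : R) :
  0 < c -> (forall x : 'rV[R]_n, c * N1 x <= N1 (x *m A)) -> A \in unitmx.
Proof.
move=> hc hA; rewrite -row_free_unit -kermx_eq0; apply/eqP/matrixP => i j.
have hk : row i (kermx A) *m A = 0 by apply/sub_kermxP; exact: row_sub.
have := hA (row i (kermx A)); rewrite hk.
have -> : N1 0 = 0 by rewrite /N1 big1 // => k _; rewrite mxE normr0.
move=> h.
have h0 : N1 (row i (kermx A)) = 0.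
  apply/eqP; rewrite eq_le N1_ge0 andbT.
  by rewrite -(pmulr_rle0 _ hc).
have := @N1_eq0 _ h0 => /rowP /(_ j); rewrite !mxE => ->.
done.
Qed.

End Aux.
Arguments N1 {R n} x.
Arguments N1_lower {R n} M g x.
Arguments N1_contract {R n} M c x.
Arguments N1_Z {R n} g x.
Arguments unit_of_lower {R n} A c.
Arguments N1_entry {R n} x i.
Arguments N1_D {R n} x y.

Theorem proposition4 (R : rcfType) (nS nA : nat)
  (P : 'I_nS -> 'I_nA -> 'I_nS -> R) (mu : 'rV[R]_nS) (gamma : R) :
  is_kernel P -> is_distr mu -> 0 <= gamma -> gamma < 1 ->
  forall (s : 'I_nS) (a : 'I_nA) (pi pi' : 'M[R]_(nS, nA)),
    is_policy pi -> is_policy pi' ->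
    `|docc mu gamma P pi' s a - docc mu gamma P pi s a|
      <= nA%:R / (1 - gamma) ^+ 2 * norm2 (pi' - pi).
Proof.
move=> [Pge0 Psum] [mu0 musum] g0 g1 s a pi pi' [p0 p1] [q0 q1].
set Nd := norm2 (pi' - pi).
have hg : 0 < 1 - gamma by rewrite subr_gt0.
have hrow : forall p, is_policy p -> forall i, \sum_(j < nS) `|Ppi P p i j| <= 1.
  move=> p [pp0 pp1] i.
  rewrite (eq_bigr (fun j => \sum_(b < nA) p i b * P i b j)); last first.
    move=> j _; rewrite mxE ger0_norm //; apply: sumr_ge0 => b _; exact: mulr_ge0.
  rewrite exchange_big /= -(pp1 i) le_eqVlt; apply/orP; left; apply/eqP.
  by apply: eq_bigr => b _; rewrite -mulr_sumr Psum mulr1.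
have hentry : forall i b, `|(pi' - pi) i b| <= Nd.
  move=> i b; rewrite /Nd /norm2 -sqrtr_sqr ler_sqrt; last first.
    by apply: sumr_ge0 => k _; apply: sumr_ge0 => l _; exact: sqr_ge0.
  rewrite (bigD1 i) //= (bigD1 b) //= -addrA lerDl.
  apply: addr_ge0; first by apply: sumr_ge0 => l _; exact: sqr_ge0.
  by apply: sumr_ge0 => k _; apply: sumr_ge0 => l _; exact: sqr_ge0.
have hNd : 0 <= Nd by exact: sqrtr_ge0.
have hdiff : forall i, \sum_(j < nS) `|(Ppi P pi' - Ppi P pi) i j| <= nA%:R * Nd.
  move=> i.
  apply: (@le_trans _ _ (\sum_(j < nS) \sum_(b < nA) `|(pi' - pi) i b| * P i b j)).
    apply: ler_sum => j _.
    have -> : (Ppi P pi' - Ppi P pi) i j = \sum_(b < nA) (pi' - pi) i b * P i b j.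
      rewrite !mxE -sumrB; apply: eq_bigr => b _; rewrite !mxE; ring.
    apply: le_trans (ler_norm_sum _ _ _) _.
    by apply: ler_sum => b _; rewrite normrM (ger0_norm (Pge0 _ _ _)).
  rewrite exchange_big /=.
  apply: (@le_trans _ _ (\sum_(b < nA) Nd)); last by rewrite sumr_const card_ord mulr_natl.
  by apply: ler_sum => b _; rewrite -mulr_sumr Psum mulr1.
set M := Ppi P pi; set M' := Ppi P pi'.
set A := 1%:M - gamma *: M; set A' := 1%:M - gamma *: M'.
have lowA : forall x : 'rV_nS, (1 - gamma) * N1 x <= N1 (x *m A).
  by move=> x; apply: N1_lower => //; exact: hrow.
have lowA' : forall x : 'rV_nS, (1 - gamma) * N1 x <= N1 (x *m A').
  by move=> x; apply: N1_lower => //; exact: hrow.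
have uA : A \in unitmx by exact: unit_of_lower hg lowA.
have uA' : A' \in unitmx by exact: unit_of_lower hg lowA'.
have invA : forall y, N1 (y *m invmx A) <= N1 y / (1 - gamma).
  move=> y; rewrite ler_pdivlMr // mulrC; have := lowA (y *m invmx A).
  by rewrite mulmxKV.
have invA' : forall y, N1 (y *m invmx A') <= N1 y / (1 - gamma).
  move=> y; rewrite ler_pdivlMr // mulrC; have := lowA' (y *m invmx A').
  by rewrite mulmxKV.
have Nmu : N1 mu = 1.
  by rewrite /N1 -musum; apply: eq_bigr => i _; rewrite ger0_norm.
set d := dstate mu gamma P pi; set d' := dstate mu gamma P pi'.
have hd : N1 d <= 1 / (1 - gamma) by have := invA mu; rewrite Nmu.
have hd' : N1 d' <= 1 / (1 - gamma) by have := invA' mu; rewrite Nmu.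
have key : (d' - d) *m A = gamma *: (d' *m (M' - M)).
  have e1 : d *m A = mu by rewrite /d /dstate mulmxKV.
  have e2 : d' *m A' = mu by rewrite /d' /dstate mulmxKV.
  rewrite mulmxBl e1 -e2 -mulmxBr scalemxAr; congr (_ *m _).
  by rewrite /A /A' scalerBr opprB addrC addrA subrK addrC.
have hdd : N1 (d' - d) <= gamma * (nA%:R * Nd) / (1 - gamma) ^+ 2.
  have -> : d' - d = gamma *: (d' *m (M' - M)) *m invmx A by rewrite -key mulmxK.
  apply: le_trans (invA _) _; rewrite N1_Z ger0_norm //.
  rewrite expr2 invfM mulrA [X in _ <= X]mulrA.
  apply: ler_wpM2r; first by rewrite invr_ge0 ltW.
  rewrite -!mulrA; apply: ler_wpM2l => //.
  apply: le_trans (N1_contract _ _ _ hdiff _) _; first exact: mulr_ge0.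
  rewrite mulrA ler_wpM2l ?mulr_ge0 //; by move: hd'; rewrite mul1r.
have hpi1 : `|pi' s a| <= 1.
  rewrite ger0_norm // -(q1 s) (bigD1 a) //= lerDl.
  by apply: sumr_ge0 => b _.
have e : docc mu gamma P pi' s a - docc mu gamma P pi s a
    = (d' - d) 0 s * pi' s a + d 0 s * (pi' - pi) s a.
  rewrite /docc -/d -/d' !mxE; ring.
have hnA : 1 <= (nA%:R : R).
  by rewrite ler1n; exact: (leq_ltn_trans (leq0n _) (ltn_ord a)).
have t1 : `|(d' - d) 0 s| * `|pi' s a| <= gamma * (nA%:R * Nd) / (1 - gamma) ^+ 2.
  apply: le_trans hdd; apply: le_trans (N1_entry _ s).
  by rewrite -[X in _ <= X]mulr1; apply: ler_wpM2l.
have t2 : `|d 0 s| * `|(pi' - pi) s a| <= 1 / (1 - gamma) * Nd.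
  by apply: ler_pM => //; apply: le_trans (N1_entry _ s) hd.
rewrite e; apply: le_trans (ler_normD _ _) _; rewrite !normrM.
apply: le_trans (lerD t1 t2) _.
rewrite -subr_ge0.
have -> : nA%:R / (1 - gamma) ^+ 2 * Nd
   - (gamma * (nA%:R * Nd) / (1 - gamma) ^+ 2 + 1 / (1 - gamma) * Nd)
   = (nA%:R - 1) * Nd / (1 - gamma).
  by field; rewrite lt0r_neq0.
apply: divr_ge0; last exact: ltW.
by apply: mulr_ge0 => //; rewrite subr_ge0.
Qed.
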